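(* We have $\sup_A\overline{\mathrm{d}}(A)=1$, where the supremum is over all L-primitive sets $A\subset\mathbb{Z}_{>1}$ and $\overline{\mathrm{d}}(A)=\limsup_{x\to\infty}|A\cap[1,x]|/x$ is the upper natural density.
   Context: For an integer $a>1$ let $P(a)$ be its largest prime factor and $\mathrm{L}_a=\{ba: b\in\mathbb{N},\ \text{every prime } p\mid b \text{ satisfies } p\ge P(a)\}$. A set $A\subset\mathbb{Z}_{>1}$ is L-primitive if $a'\notin\mathrm{L}_a$ for all distinct $a,a'\in A$. *)

(* Defs.v *)
From mathcomp Require Import all_boot all_order all_algebra.
From mathcomp Require Import all_classical all_reals all_analysis.
Set Implicit Arguments. Unset Strict Implicit. Unset Printing Implicit Defensive.
Import Order.TTheory GRing.Theory Num.Theory.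

Definition inL (a a' : nat) : Prop :=
  exists b : nat, 0 < b /\ a' = b * a /\
    (forall p : nat, prime p -> p %| b -> max_pdiv a <= p).

Definition L_primitive (A : pred nat) : Prop :=
  (forall a, A a -> 1 < a) /\
  (forall a a', A a -> A a' -> a <> a' -> ~ inL a a').

Definition count_upto (A : pred nat) (n : nat) : nat :=
  \sum_(1 <= k < n.+1) A k.

Local Open Scope ring_scope.
Definition upper_density (R : realType) (A : pred nat) : \bar R :=
  limn_esup (fun n : nat => ((count_upto A n)%:R / n%:R : R)%:E).

(* Main.v *)
Require Import Defs.
From mathcomp Require Import all_boot all_order all_algebra.
From mathcomp Require Import all_classical all_reals all_analysis.
From mathcomp Require Import zify.


Definition G N Y := \sum_(0 <= b < Y) coprime b N.

Lemma sum_mult a Z (Q : nat -> bool) : 0 < a ->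
  \sum_(0 <= m < a * Z) ((a %| m) && Q (m %/ a)) = \sum_(0 <= b < Z) Q b.
Proof.
move=> a0; elim: Z => [|Z IH]; first by rewrite muln0 !big_geq.
rewrite mulnS addnC (big_cat_nat _ (n:=a*Z)) ?leq_addr // IH big_nat_recr //=.
congr (_ + _).
rewrite big_ltn; last by lia.
rewrite (dvdn_mulr Z (dvdnn a)) mulKn // big_nat_cond big1 ?addn0 //.
move=> m /andP[/andP[h1 h2] _].
have e : m = a * Z + (m - a * Z) by rewrite subnKC // ltnW.
rewrite e (dvdn_addr _ (dvdn_mulr Z (dvdnn a))).
have h3 : 0 < m - a * Z by rewrite subn_gt0.
have h4 : m - a * Z < a by rewrite ltn_subLR // ltnW.
case: (boolP (a %| m - a * Z)) => // /(dvdn_leq h3); rewrite leqNgt h4.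
by [].
Qed.

Lemma G_period N k : G N (k * N) = k * G N N.
Proof.
elim: k => [|k IH]; first by rewrite /G !mul0n big_geq.
rewrite mulSn /G (big_cat_nat _ (n:=N)) ?leq_addr //= -/(G N N).
rewrite mulSn; congr (_ + _); rewrite -IH /G.
rewrite -{1}[N]add0n big_addn addnC addnK.
apply: eq_bigr => b _; by rewrite /coprime gcdnC gcdnDr gcdnC.
Qed.

Lemma leq_sum_nat m n (F1 F2 : nat -> nat) :
  (forall i, m <= i < n -> F1 i <= F2 i) ->
  \sum_(m <= i < n) F1 i <= \sum_(m <= i < n) F2 i.
Proof.
move=> h; rewrite big_nat_cond [X in _ <= X]big_nat_cond.
by apply: leq_sum => i /andP[hi _]; exact: h.
Qed.

Lemma fiber n N m : 0 < n -> n %| N -> n %| m -> coprime (m %/ n) N ->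
  gcdn m N = n.
Proof.
move=> n0 nN nm cop.
rewrite gcdnC -(divnK nm) Gauss_gcdr; last by rewrite coprime_sym.
exact/gcdn_idPr.
Qed.

Lemma sum_eq_ind k g : \sum_(0 <= i < k) (i == g) = (g < k).
Proof.
elim: k => [|k IH]; first by rewrite big_geq.
rewrite big_nat_recr //= IH ltnS.
case: (ltngtP g k) => h; lia.
Qed.

Lemma phi_harm R : G R`! R`! * \sum_(1 <= n < R.+1) R`! %/ n <= R`! * R`!.
Proof.
set N := R`!.
have N0 : 0 < N by rewrite /N fact_gt0.
rewrite big_distrr /=.
have step2 : forall n, 1 <= n < R.+1 -> G N N * (N %/ n) =
    \sum_(0 <= m < N * N) ((n %| m) && coprime (m %/ n) N).
  move=> n /andP[n1 nR].
  have nN : n %| N by rewrite /N dvdn_fact // n1 -ltnS.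
  have e : N * N = n * (N %/ n * N) by rewrite mulnA (mulnC n) divnK.
  rewrite e (sum_mult n (N %/ n * N) (fun b => coprime b N)) ?(leq_trans _ n1) //.
  by rewrite mulnC -G_period.
rewrite (eq_big_nat _ _ step2) exchange_big_nat /=.
apply: (@leq_trans (\sum_(0 <= m < N * N) 1)); last first.
  by rewrite sum_nat_const_nat subn0 muln1.
apply: leq_sum => m _.
apply: (@leq_trans (\sum_(1 <= n < R.+1) (n == gcdn m N))).
  apply: leq_sum_nat => n /andP[n1 nR].
  case: (boolP ((n %| m) && coprime (m %/ n) N)) => //= /andP[h1 h2].
  rewrite (@fiber n N m n1 _ h1 h2) ?eqxx //.
  by rewrite /N dvdn_fact // n1 -ltnS.
apply: (@leq_trans (\sum_(0 <= n < R.+1) (n == gcdn m N))).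
  by rewrite (@big_ltn _ _ _ 0) //= leq_addl.
by rewrite sum_eq_ind; case: (_ < _).
Qed.

Lemma harm N t : (forall n, 0 < n <= 2 ^ t -> n %| N) ->
  t * (N %/ 2) <= \sum_(1 <= n < (2 ^ t).+1) N %/ n.
Proof.
elim: t => [|t IH] h; first by rewrite mul0n.
have h' : forall n, 0 < n <= 2 ^ t -> n %| N.
  move=> n /andP[n0 nt]; apply: h; rewrite n0 /= (leq_trans nt) // leq_exp2l //.
have le1 : 2 ^ t <= 2 ^ t.+1 by rewrite leq_exp2l.
rewrite (big_cat_nat _ (n := (2 ^ t).+1)) //=.
rewrite mulSn addnC; apply: leq_add; first exact: IH.
have [q eN] : exists q, N = q * 2 ^ t.+1.
  by apply/dvdnP; apply: h; rewrite expn_gt0 leqnn.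
apply: (@leq_trans (\sum_((2 ^ t).+1 <= n < (2 ^ t.+1).+1) N %/ 2 ^ t.+1)).
  rewrite sum_nat_const_nat subSS.
  have -> : 2 ^ t.+1 - 2 ^ t = 2 ^ t by rewrite expnS mul2n -addnn addnK.
  by rewrite eN mulnK ?expn_gt0 // expnS mulnCA mulKn // mulnC.
apply: leq_sum_nat => n /andP[n1 n2]; apply: leq_div2l => //.
by apply: leq_trans n1.
Qed.

Lemma phi_small c K : exists R, K <= R /\ c * G R`! R`! <= R`!.
Proof.
pose t := (2 * c + K).+1.
exists (2 ^ t); set R := 2 ^ t; set N := R`!; set phi := G N N.
have Kt : K <= R by apply: leq_trans (ltn_expl t (ltnSn 1)); rewrite /t; lia.
split => //.
have hyp : forall n, 0 < n <= 2 ^ t -> n %| N by move=> n hn; exact: dvdn_fact.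
have H1 := harm N t hyp.
have H2 := phi_harm R.
have H3 : phi * (t * (N %/ 2)) <= N * N := leq_trans (leq_mul (leqnn phi) H1) H2.
have R2 : 2 <= R by rewrite /R /t expnS leq_pmulr // expn_gt0.
have d2 : 2 %| N by rewrite /N dvdn_fact // R2.
have eN : N = N %/ 2 * 2 by rewrite divnK.
have N2 : 0 < N %/ 2 by rewrite divn_gt0 // dvdn_leq // fact_gt0.
have H4 : phi * t <= N * 2.
  rewrite -(leq_pmul2r N2) -mulnA; apply: leq_trans H3 _.
  by rewrite -mulnA (mulnC 2) -eN.
rewrite /t in H4; nia.
Qed.

Lemma G_mono N Y Y' : Y <= Y' -> G N Y <= G N Y'.
Proof.
move=> h; rewrite /G [X in _ <= X](big_cat_nat _ (n := Y)) //=; exact: leq_addr.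
Qed.

Lemma G_bound c N Y : 0 < N -> c * G N N <= N -> c * G N Y <= Y + N.
Proof.
move=> N0 hc.
apply: (@leq_trans (c * G N ((Y %/ N).+1 * N))).
  by rewrite leq_mul2l G_mono ?orbT // ltnW // ltn_ceil.
rewrite G_period mulnCA.
apply: (@leq_trans ((Y %/ N).+1 * N)); first by rewrite leq_mul2l hc orbT.
by rewrite mulSn addnC leq_add2r leq_divM.
Qed.

Definition smooth x R := \sum_(0 <= n < x.+1) (max_pdiv n <= R).

Lemma logn_le_L p i L : 0 < i -> i < 2 ^ L.+1 -> logn p i < L.+1.
Proof.
move=> i0 iL.
case: (boolP (prime p)) => pp; last by rewrite lognE (negPf pp).
set e := logn p i.
have h1 : p ^ e <= i by apply: dvdn_leq => //; exact: pfactor_dvdnn.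
have h2 : 2 ^ e <= p ^ e.
  case: e h1 => [|e'] _; first by [].
  by rewrite leq_exp2r // prime_gt1.
by rewrite -(ltn_exp2l _ _ (ltnSn 1)); apply: leq_ltn_trans h2 (leq_ltn_trans h1 iL).
Qed.

Lemma smooth_card x R L : x < 2 ^ L.+1 ->
  #|[pred i : 'I_x.+1 | (0 < i) && (max_pdiv i <= R)]| <= L.+1 ^ R.+1.
Proof.
move=> xL.
set S := [pred i : 'I_x.+1 | (0 < i) && (max_pdiv i <= R)].
pose f (i : 'I_x.+1) : {ffun 'I_R.+1 -> 'I_L.+1} :=
  [ffun p : 'I_R.+1 => inord (logn p i)].
rewrite -(@card_in_imset _ _ f); last first.
  move=> i j /andP[i0 iR] /andP[j0 jR] eqf.
  have hlog : forall p, p <= R -> logn p i = logn p j.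
    move=> p pR.
    have := congr1 (fun g : {ffun 'I_R.+1 -> 'I_L.+1} => nat_of_ord (g (@Ordinal R.+1 p pR))) eqf.
    rewrite /f !ffunE /= !inordK //; apply: logn_le_L => //.
      by apply: leq_ltn_trans xL; rewrite -ltnS.
    by apply: leq_ltn_trans xL; rewrite -ltnS.
  pose pi := [pred p : nat | p <= R].
  have pn : forall k : 'I_x.+1, 0 < k -> max_pdiv k <= R -> pi.-nat k.
    move=> k k0 kR; apply/pnatP => // p pp pk.
    rewrite inE /=; apply: leq_trans kR; apply: max_pdiv_max.
    by rewrite mem_primes pp k0 pk.
  apply: val_inj => /=.
  rewrite -(part_pnat_id (pn _ i0 iR)) -(part_pnat_id (pn _ j0 jR)).
  by apply: eq_partn_from_log => // p; rewrite inE /= => pR; exact: hlog.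
apply: (leq_trans (max_card _)).
by rewrite card_ffun !card_ord.
Qed.

Lemma smooth_bound x R L : x < 2 ^ L.+1 -> smooth x R <= 1 + L.+1 ^ R.+1.
Proof.
move=> xL.
apply: (@leq_trans (\sum_(0 <= n < x.+1) ((n == 0) + ((0 < n) && (max_pdiv n <= R))))).
  rewrite /smooth; apply: leq_sum_nat => n _; case: n => [|n] //=; by case: (_ <= R).
rewrite big_split /= sum_eq_ind /= leq_add2l.
apply: leq_trans (@smooth_card x R L xL).
rewrite big_mkord -sum1_card.
rewrite [X in _ <= X]big_mkcond /=; apply: leq_sum => i _; rewrite inE /=; by case: (_ && _).
Qed.

Lemma leq_expb m n e : m <= n -> m ^ e <= n ^ e.
Proof. by move=> h; elim: e => // e IH; rewrite !expnS leq_mul. Qed.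

Lemma poly_exp d b M : exists E, M <= E /\ 1 + (E + b) ^ d <= 2 ^ E.
Proof.
pose t := M + b + 2 * d + 1.
have h1 : t < 2 ^ t := ltn_expl t (ltnSn 1).
pose E := 2 ^ (t + t).
have hE : E = 2 ^ t * 2 ^ t by rewrite /E expnD.
have tE : t <= E by rewrite hE; apply: leq_trans (ltnW h1) _; rewrite leq_pmulr // expn_gt0.
exists E; split; first by apply: leq_trans tE; rewrite /t; lia.
have bE : b <= E by apply: leq_trans tE; rewrite /t; lia.
have h2 : (E + b) ^ d <= 2 ^ ((t + t).+1 * d).
  rewrite expnM; apply: leq_expb; rewrite expnS -/E; lia.
have h3 : ((t + t).+1 * d).+1 <= E.
  rewrite hE; apply: (@leq_trans (t.+1 * t.+1)); last exact: leq_mul.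
  rewrite /t; nia.
apply: (@leq_trans (2 ^ ((t + t).+1 * d).+1)); last exact: leq_pexp2l.
rewrite expnS mul2n -addnn; apply: leq_add => //.
by rewrite expn_gt0.
Qed.

Lemma prime_dvd_fact p R : prime p -> p %| R`! -> p <= R.
Proof.
move=> pp; elim: R => [|R IH]; first by rewrite dvdn1 => /eqP e; move: pp; rewrite e.
rewrite factS Euclid_dvdM // => /orP[h|h].
  by apply: dvdn_leq.
by apply: leq_trans (IH h) _.
Qed.

Lemma cop_fact b R : 0 < b -> (forall p, prime p -> p %| b -> R < p) -> coprime b R`!.
Proof.
move=> b0 h; rewrite coprime_has_primes // ?fact_gt0 //.
apply/hasPn => p; rewrite mem_primes => /and3P[pp _ pR].
rewrite mem_primes pp b0 /=; apply/negP => pb.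
by have := h p pp pb; rewrite ltnNge prime_dvd_fact.
Qed.

Lemma sum_pos m n i (F : nat -> nat) : m <= i < n -> F i <= \sum_(m <= k < n) F k.
Proof.
move=> /andP[mi in_]; rewrite (big_cat_nat _ (n := i)) //=; last exact: ltnW.
by rewrite (@big_ltn _ _ _ i n) //= addnCA leq_addr.
Qed.

Lemma sum_pos' m n i (F : nat -> nat) : 0 < F i -> m <= i < n -> 0 < \sum_(m <= k < n) F k.
Proof. by move=> h1 h2; apply: leq_trans h1 (@sum_pos m n i F h2). Qed.

Lemma sum_prefix (F : nat -> nat) m n : m <= n ->
  \sum_(0 <= i < m) F i <= \sum_(0 <= i < n) F i.
Proof. move=> h; rewrite [X in _ <= X](big_cat_nat _ (n := m)) //=; exact: leq_addr. Qed.

Lemma sum_gt y k : \sum_(0 <= n < k) (y < n) = k - y.+1.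
Proof.
elim: k => [|k IH]; first by rewrite big_geq.
rewrite big_nat_recr //= IH; case: (ltnP y k) => h; lia.
Qed.

Lemma sum_half l y : \sum_(0 <= j < l) y %/ 2 ^ j.+1 <= y.
Proof.
elim: l y => [|l IH] y; first by rewrite big_geq.
rewrite big_nat_recl //=.
have e : \sum_(0 <= j < l) y %/ 2 ^ j.+2 = \sum_(0 <= j < l) (y %/ 2) %/ 2 ^ j.+1.
  by apply: eq_bigr => j _; rewrite expnS divnMA.
rewrite e; apply: (@leq_trans (y %/ 2 + y %/ 2)); first by rewrite leq_add2l IH.
lia.
Qed.

Lemma inL_le a a' : 0 < a' -> inL a a' -> a <= a'.
Proof. move=> a0 [b [b0 [e _]]]; rewrite e leq_pmull //. Qed.

Lemma inL_gt a a' : 0 < a -> a <> a' -> inL a a' ->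
  exists q, max_pdiv a <= q /\ q * a <= a'.
Proof.
move=> a0 ne [b [b0 [e h]]].
have b1 : 1 < b.
  case: b b0 e {h} => [|[|b]] // _ e; by move: ne; rewrite e mul1n.
exists (pdiv b); split; first by apply: h; [exact: pdiv_prime|exact: pdiv_dvd].
by rewrite e leq_mul2r pdiv_leq ?orbT // ltnW.
Qed.

Definition cj K j := (K.+1 * K) * 2 ^ j.+1.

Definition good K j ymin S (p : nat * nat) : Prop :=
  [/\ K <= p.1, cj K j * G p.1`! p.1`! <= p.1`!, ymin <= p.2, S <= p.2 &
      0 < p.2 /\ smooth (K * p.2) p.1 <= p.2].

Lemma good_ex K j ymin S : exists p, good K j ymin S p.
Proof.
have [R [KR hR]] := phi_small (cj K j) K.
have [E [ME hE]] := poly_exp R.+1 K (ymin + S + 1).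
have E0 : 0 < E by apply: leq_trans ME; rewrite addn1.
have Ey : E < 2 ^ E := ltn_expl E (ltnSn 1).
exists (R, 2 ^ E); split => //=.
- by apply: leq_trans (ltnW Ey); apply: leq_trans ME; lia.
- by apply: leq_trans (ltnW Ey); apply: leq_trans ME; lia.
split; first by rewrite expn_gt0.
have xL : K * 2 ^ E < 2 ^ (E + K - 1).+1.
  have -> : (E + K - 1).+1 = K + E by lia.
  by rewrite expnD ltn_pmul2r ?expn_gt0 // ltn_expl.
apply: leq_trans (@smooth_bound _ R _ xL) _.
have -> : (E + K - 1).+1 = E + K by lia.
exact: hE.
Qed.

Definition pick K j ymin S : nat * nat := proj1_sig (cid (good_ex K j ymin S)).

Lemma pickP K j ymin S : good K j ymin S (pick K j ymin S).
Proof. exact: (proj2_sig (cid (good_ex K j ymin S))). Qed.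

Definition Tj K (p : nat * nat) := (K * p.2).+1 * (1 + p.1`!).

Fixpoint st K j : (nat * nat) * nat :=
  match j with
  | 0 => let p := pick K 0 1 0 in (p, Tj K p)
  | j'.+1 => let p := pick K j (K * (st K j').1.2) (st K j').2 in
             (p, (st K j').2 + Tj K p)
  end.

Definition blk K j := (st K j).1.
Definition Sb K j := \sum_(0 <= i < j) Tj K (blk K i).

Lemma st_S K j : (st K j).2 = Sb K j.+1.
Proof.
elim: j => [|j IH]; first by rewrite /Sb big_nat1.
by rewrite /Sb big_nat_recr //= -/(Sb K j.+1) -IH.
Qed.

Lemma blk_good K j :
  good K j (if j is j'.+1 then K * (blk K j').2 else 1) (Sb K j) (blk K j).
Proof.
case: j => [|j]; first by rewrite /Sb big_geq //; exact: pickP.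
by rewrite /blk /= -st_S; exact: pickP.
Qed.

Definition inB K (p : nat * nat) n := (p.2 < n) && (n <= K * p.2) && (p.1 < max_pdiv n).

Definition Aset K : pred nat := fun n =>
  `[< exists l, inB K (blk K l) n /\
        forall j, j < l -> forall a, inB K (blk K j) a -> ~ inL a n >].

Lemma y_step K j : K * (blk K j).2 <= (blk K j.+1).2.
Proof. by have [_ _ h _ _] := blk_good K j.+1. Qed.

Lemma y_pos K j : 0 < (blk K j).2.
Proof. by have [_ _ _ _ [h _]] := blk_good K j. Qed.

Lemma R_ge K j : K <= (blk K j).1.
Proof. by have [h _ _ _ _] := blk_good K j. Qed.

Lemma y_mono K j l : 0 < K -> j < l -> K * (blk K j).2 <= (blk K l).2.
Proof.
move=> K0; elim: l => [|l IH] //; rewrite ltnS leq_eqVlt => /orP[/eqP ->|h].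
  exact: y_step.
apply: leq_trans (IH h) _; apply: leq_trans (y_step K l); exact: leq_pmull.
Qed.

Lemma Aset_prim K : 0 < K -> L_primitive (Aset K).
Proof.
move=> K0; split.
  move=> a /asboolP[l [/andP[/andP[h1 _] _] _]].
  by apply: leq_trans h1; apply: y_pos.
move=> a a' /asboolP[j [Ba _]] /asboolP[l [Ba' rem]] ne hL.
move: (Ba) (Ba') => /andP[/andP[a1 a2] a3] /andP[/andP[b1 b2] b3].
have apos : 0 < a by apply: leq_ltn_trans a1.
have a'pos : 0 < a' by apply: leq_ltn_trans b1.
case: (ltngtP j l) => jl.
- exact: (rem j jl a Ba hL).
- have := @y_mono K l j K0 jl; have := @inL_le a a' a'pos hL; lia.
- move: jl a1 a2 a3 Ba => -> a1 a2 a3 Ba.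
  have [q [hq qa]] := @inL_gt a a' apos ne hL.
  have Kq : K <= q by apply: leq_trans (R_ge K l) _; apply: leq_trans (ltnW a3) hq.
  have : K * a <= a' by apply: leq_trans qa; rewrite leq_mul2r Kq orbT.
  have : K * (blk K l).2 < K * a by rewrite ltn_pmul2l.
  lia.
Qed.

Definition badt K j n a :=
  inB K (blk K j) a && (a %| n) && coprime (n %/ a) (blk K j).1`!.

Lemma bad_le K j x : 0 < K ->
  cj K j * \sum_(0 <= a < (K * (blk K j).2).+1) \sum_(0 <= n < x.+1) badt K j n a
    <= K.+1 * x + Tj K (blk K j).
Proof.
move=> K0.
set yj := (blk K j).2; set N := (blk K j).1`!.
have yj0 : 0 < yj := y_pos K j.
have N0 : 0 < N by rewrite /N fact_gt0.
have [_ hc _ _ _] := blk_good K j.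
rewrite big_distrr /=.
apply: (@leq_trans (\sum_(0 <= a < (K * yj).+1) ((x %/ yj).+1 + N))).
  apply: leq_sum_nat => a _.
  case: (boolP (inB K (blk K j) a)) => Ba; last first.
    by rewrite big1 ?muln0 // => n _; rewrite /badt (negPf Ba).
  have ya : yj < a by move: Ba => /andP[/andP[]]. 
  have a0 : 0 < a by apply: leq_ltn_trans ya.
  have e : \sum_(0 <= n < x.+1) badt K j n a =
           \sum_(0 <= n < x.+1) ((a %| n) && coprime (n %/ a) N).
    by apply: eq_bigr => n _; rewrite /badt Ba.
  rewrite e.
  apply: (@leq_trans (cj K j * G N (x %/ a).+1)).
    rewrite leq_mul2l; apply/orP; right.
    rewrite /G -(sum_mult a (x %/ a).+1 (fun b => coprime b N) a0).
    apply: sum_prefix; rewrite mulnC; exact: ltn_ceil.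
  apply: leq_trans (@G_bound (cj K j) N (x %/ a).+1 N0 hc) _.
  by rewrite leq_add2r ltnS leq_div2l // ltnW.
rewrite sum_nat_const_nat subn0 /Tj -/yj -/N.
have f1 : x %/ yj * yj <= x := leq_divM x yj.
have f2 : x %/ yj <= x := leq_div x yj.
have f3 : K * (x %/ yj * yj) <= K * x by rewrite leq_mul2l f1 orbT.
nia.
Qed.

Lemma bad_sum K j y : 0 < K ->
  \sum_(0 <= a < (K * (blk K j).2).+1) \sum_(0 <= n < (K * y).+1) badt K j n a
    <= y %/ 2 ^ j.+1 + Tj K (blk K j).
Proof.
move=> K0; set B := \sum_(0 <= a < _) _.
have h := @bad_le K j (K * y) K0; rewrite -/B in h.
have h2 : B * 2 ^ j.+1 <= y + Tj K (blk K j).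
  have KK : 0 < K.+1 * K by rewrite muln_gt0.
  rewrite -(leq_pmul2l KK); apply: leq_trans (leq_trans _ h) _.
    by rewrite /cj [B * _]mulnC mulnA.
  by rewrite mulnDr mulnA leq_add2l leq_pmull.
rewrite -leq_divRL ?expn_gt0 // in h2.
apply: leq_trans h2 _.
rewrite -[X in _ <= _ + X](@mulnK _ (2 ^ j.+1)) ?expn_gt0 //.
rewrite -divnDMl ?expn_gt0 // leq_div2r // mulnK ?expn_gt0 // leq_add2l leq_pmulr // expn_gt0 //=.
Qed.

Lemma pointwise K l n : n <= K * (blk K l).2 ->
  ((blk K l).2 < n) <= Aset K n + (max_pdiv n <= (blk K l).1) +
     \sum_(0 <= j < l) \sum_(0 <= a < (K * (blk K j).2).+1) badt K j n a.
Proof.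
set y := (blk K l).2 => nx.
case: (boolP (y < n)) => yn //.
case: (boolP (max_pdiv n <= (blk K l).1)) => sm; first by rewrite addnAC leq_addl.
case: (boolP (Aset K n)) => An; first by rewrite -addnA leq_addr.
case: (pselect (exists j, j < l /\ exists a, inB K (blk K j) a /\ inL a n)); last first.
  move=> none; exfalso; move/negP: An; apply; apply/asboolP; exists l; split.
    by rewrite /inB yn nx ltnNge sm.
  by move=> j jl a Ba hL; apply: none; exists j; split => //; exists a.
move=> [j [jl [a [Ba hL]]]].
rewrite !add0n.
apply: (@sum_pos' 0 l j); last by rewrite jl.
apply: (@sum_pos' 0 _ a); last by move: Ba => /andP[/andP[_ h] _]; rewrite ltnS h.
move: (hL) => [b [b0 [e hb]]].
move: (Ba) => /andP[/andP[a1 a2] a3].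
have a0 : 0 < a := leq_ltn_trans (leq0n _) a1.
rewrite /badt Ba e dvdn_mull // mulnK //=.
rewrite cop_fact //= => p pp pb.
by apply: leq_trans a3 _; exact: hb.
Qed.

Lemma Aset0 K : Aset K 0 = false.
Proof. by apply/negP => /asboolP[l [/andP[/andP[]]]]. Qed.

Lemma main_count K l : 0 < K ->
  K * (blk K l).2 <= count_upto (Aset K) (K * (blk K l).2) + 4 * (blk K l).2.
Proof.
move=> K0; set y := (blk K l).2; set x := K * y.
have S1 : \sum_(0 <= n < x.+1) (y < n) <=
   \sum_(0 <= n < x.+1) (Aset K n + (max_pdiv n <= (blk K l).1) +
     \sum_(0 <= j < l) \sum_(0 <= a < (K * (blk K j).2).+1) badt K j n a).
  by apply: leq_sum_nat => n /andP[_ hn]; apply: pointwise; rewrite -ltnS.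
rewrite sum_gt !big_split /= in S1.
have C : \sum_(0 <= n < x.+1) Aset K n = count_upto (Aset K) x.
  by rewrite /count_upto big_ltn //= Aset0.
have [_ _ _ hS [_ hsm]] := blk_good K l.
have Sm : \sum_(0 <= n < x.+1) (max_pdiv n <= (blk K l).1) <= y := hsm.
have T : \sum_(0 <= n < x.+1)
     \sum_(0 <= j < l) \sum_(0 <= a < (K * (blk K j).2).+1) badt K j n a <= y + y.
  rewrite exchange_big_nat /=.
  apply: (@leq_trans (\sum_(0 <= j < l) (y %/ 2 ^ j.+1 + Tj K (blk K j)))).
    apply: leq_sum_nat => j _; rewrite exchange_big_nat /=; exact: bad_sum.
  rewrite big_split /=; apply: leq_add; first exact: sum_half.
  exact: hS.
rewrite C in S1.
have yx : y <= x by rewrite /x leq_pmull.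
lia.
Qed.

Lemma y_ge K l : 1 < K -> l < (blk K l).2.
Proof.
move=> K1; elim: l => [|l IH]; first exact: y_pos.
apply: leq_trans (y_step K l).
have : 2 * (blk K l).2 <= K * (blk K l).2 by rewrite leq_mul2r K1 orbT.
lia.
Qed.

Lemma key (K : nat) : (4 < K)%N -> exists A : pred nat, L_primitive A /\
  forall M, exists x, (M <= x)%N /\ (0 < x)%N /\
     (K * x <= K * count_upto A x + 4 * x)%N.
Proof.
move=> K4; have K0 : 0 < K by apply: leq_trans K4.
exists (Aset K); split; first exact: Aset_prim.
move=> M; exists (K * (blk K M).2); split.
  have K1 : 1 < K by apply: leq_trans K4.
  apply: leq_trans (ltnW (@y_ge K M K1)) _; exact: leq_pmull.
split; first by rewrite muln_gt0 K0 y_pos.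
have := @main_count K M K0; nia.
Qed.

Import Order.TTheory GRing.Theory Num.Theory.
Local Open Scope classical_set_scope.
Local Open Scope ereal_scope.

Lemma count_le A n : (count_upto A n <= n)%N.
Proof.
rewrite /count_upto.
apply: leq_trans (_ : \sum_(1 <= k < n.+1) 1 <= n)%N.
  by apply: leq_sum => i _; case: (A i).
by rewrite sum_nat_const_nat muln1 subn1.
Qed.

Lemma limn_esupE (R : realType) (u : (\bar R)^nat) :
  limn_esup u = ereal_inf (range (esups u)).
Proof. by rewrite limn_esup_lim; apply/cvg_lim => //; exact: cvg_esups_inf. Qed.

Lemma ud_le1 (R : realType) A : upper_density R A <= 1.
Proof.
rewrite /upper_density limn_esupE.
apply: le_trans (ereal_inf_lbound _) _; first by exists 0%N.
apply: ge_ereal_sup => _ [k _ <-].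
rewrite lee_fin.
have [->|k0] := eqVneq k 0%N; first by rewrite /count_upto big_geq // mul0r ler01.
rewrite ler_pdivrMr ?ltr0n ?lt0n // mul1r ler_nat; exact: count_le.
Qed.

Lemma ud_ge (R : realType) A (K : nat) : (0 < K)%N ->
  (forall M, exists x, (M <= x)%N /\ (0 < x)%N /\
     (K * x <= K * count_upto A x + 4 * x)%N) ->
  ((1 - 4%:R / K%:R : R)%:E <= upper_density R A).
Proof.
move=> K0 H.
rewrite /upper_density limn_esupE.
apply: le_ereal_inf_tmp => _ [n _ <-].
have [x [nx [x0 Hx]]] := H n.
apply: le_trans (ereal_sup_ubound _) ; last by exists x.
rewrite lee_fin.
have Kp : (0 < K%:R :> R)%R by rewrite ltr0n.
have xp : (0 < x%:R :> R)%R by rewrite ltr0n.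
rewrite ler_pdivlMr // mulrBl mul1r lerBlDr -(ler_pM2l Kp).
have h : (K%:R * x%:R <= K%:R * (count_upto A x)%:R + 4%:R * x%:R :> R)%R.
  by rewrite -!natrM -natrD ler_nat.
have -> : (K%:R * ((count_upto A x)%:R + 4%:R / K%:R * x%:R) =
   K%:R * (count_upto A x)%:R + 4%:R * x%:R :> R)%R.
  rewrite mulrDr; congr (_ + _)%R.
  by rewrite mulrA mulrCA divff ?mulr1 // gt_eqF.
exact: h.
Qed.

Theorem proposition5p2 (R : realType) :
  ereal_sup [set upper_density R A | A in [set A : pred nat | L_primitive A]] = 1%E.
Proof.
apply/eqP; rewrite eq_le; apply/andP; split.
  by apply: ge_ereal_sup => _ [A _ <-]; exact: ud_le1.
apply/lee_addgt0Pr => e e0.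
pose K := (Num.truncn (4%:R / e)%R + 5)%N.
have K4 : (4 < K)%N by rewrite /K addnS !ltnS leq_addl.
have [A [HA HK]] := key _ K4.
have h := ud_ge R A K (ltnW (ltnW (ltnW (ltnW K4)))) HK.
have Kp : (0 < K%:R :> R)%R by rewrite ltr0n (ltn_trans _ K4).
have he : (4%:R / K%:R <= e :> R)%R.
  apply/ltW; rewrite ltr_pdivrMr //.
  have := truncnS_gt (4%:R / e)%R; rewrite ltr_pdivrMr // => h1.
  apply: lt_le_trans h1 _; rewrite mulrC ler_pM2l // ler_nat /K addnS.
  by rewrite ltnS leq_addr.
apply: le_trans (leeD (le_trans h (ereal_sup_ubound _)) (lexx _)); last by exists A.
rewrite -EFinD lee_fin -lerBlDr; exact: lerB.
Qed.
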